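(* Let $q$ be a prime power and $n$ a positive integer. If there exists an element of $\mathbb{F}_{q^n}$ that is primitive and $2$-normal over $\mathbb{F}_q$, then $n\geq 4$, and if moreover $n=4$ then $q\equiv 1\pmod 4$.
   Context: An element of $\mathbb{F}_{q^n}$ is primitive if it generates $\mathbb{F}_{q^n}^*$. For $\alpha\in\mathbb{F}_{q^n}$ let $g_\alpha(x)=\sum_{i=0}^{n-1}\alpha^{q^i}x^{n-1-i}$; $\alpha$ is $k$-normal over $\mathbb{F}_q$ if $\gcd(x^n-1,g_\alpha(x))$ in $\mathbb{F}_{q^n}[x]$ has degree $k$. *)

(* Defs.v *)
From mathcomp Require Import all_boot all_order all_algebra all_field.
Set Implicit Arguments. Unset Strict Implicit. Unset Printing Implicit Defensive.
Import GRing.Theory.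
Local Open Scope ring_scope.

Definition prime_power (q : nat) : Prop :=
  exists p k : nat, prime p /\ (0 < k)%N /\ q = (p ^ k)%N.

Definition primitive_elt (L : finFieldType) (a : L) : Prop :=
  forall b : L, b != 0 -> exists k : nat, b = a ^+ k.

Definition g_poly (L : finFieldType) (q n : nat) (a : L) : {poly L} :=
  \sum_(i < n) (a ^+ (q ^ i)%N)%:P * 'X^(n.-1 - i).

Definition k_normal (L : finFieldType) (q n k : nat) (a : L) : Prop :=
  (size (gcdp ('X^n - 1) (g_poly q n a))).-1 = k.

(* Main.v *)
Require Import Defs.
From mathcomp Require Import all_boot all_order all_algebra all_field.
From mathcomp Require Import ring zify.
Set Implicit Arguments. Unset Strict Implicit. Unset Printing Implicit Defensive.
Import GRing.Theory.
Local Open Scope ring_scope.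


Lemma prim_bound (L : finFieldType) (a : L) (m : nat) :
  primitive_elt a -> (forall k, exists j, (j < m)%N /\ a ^+ k = a ^+ j) ->
  (#|L| <= m.+1)%N.
Proof.
move=> pa hk.
have sub : {subset predC1 (0 : L) <= codom (fun j : 'I_m => a ^+ j)}.
  move=> b /= nb; have [k ->] := pa b nb.
  have [j [jm ->]] := hk k.
  by apply/codomP; exists (Ordinal jm).
have := card_size (codom (fun j : 'I_m => a ^+ j)).
rewrite size_codom card_ord => h1.
have := subset_leq_card (introT subsetP sub).
rewrite cardC1 => h2.
have := leq_trans h2 h1. by case: #|L|.
Qed.

Lemma prim_ord (L : finFieldType) (a : L) (m : nat) :
  primitive_elt a -> (0 < m)%N -> a ^+ m = 1 -> (#|L| <= m.+1)%N.
Proof.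
move=> pa m0 am; apply: prim_bound pa _ => k.
exists (k %% m)%N; split; first by rewrite ltn_pmod.
by rewrite {1}(divn_eq k m) exprD mulnC exprM am expr1n mul1r.
Qed.

Lemma prim0 (L : finFieldType) : primitive_elt (0 : L) -> (#|L| <= 3)%N.
Proof.
move=> pa; apply: prim_bound pa _ => k.
case: k => [|k]; first by exists 0%N.
by exists 1%N; rewrite !expr0n.
Qed.


Lemma frobD (L : finFieldType) p k (chp : p \in [char L]) (x y : L) :
  (x + y) ^+ (p ^ k) = x ^+ (p ^ k) + y ^+ (p ^ k).
Proof.
apply: exprDn_pchar.
rewrite (eq_pnat _ (pcharf_eq chp)) pnatX pnat_id ?orbT //.
exact: pcharf_prime chp.
Qed.

Lemma g3 (L : finFieldType) q (a : L) :
  g_poly q 3 a = a%:P * 'X^2 + (a ^+ q)%:P * 'X + (a ^+ (q ^ 2))%:P.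
Proof.
rewrite /g_poly !big_ord_recr big_ord0 /= add0r expn0 expn1 expr1 expr0 mulr1.
by [].
Qed.

Lemma g4 (L : finFieldType) q (a : L) :
  g_poly q 4 a = a%:P * 'X^3 + (a ^+ q)%:P * 'X^2 + (a ^+ (q ^ 2))%:P * 'X + (a ^+ (q ^ 3))%:P.
Proof.
rewrite /g_poly !big_ord_recr big_ord0 /= add0r expn0 expn1 expr1 expr0 mulr1.
by [].
Qed.

Lemma g2 (L : finFieldType) q (a : L) :
  g_poly q 2 a = a%:P * 'X + (a ^+ q)%:P.
Proof.
rewrite /g_poly !big_ord_recr big_ord0 /= add0r expn0 expn1 expr1 expr0 mulr1.
by [].
Qed.


Lemma size_lin (L : fieldType) (u v : L) : (size (u%:P * 'X + v%:P)%R <= 2)%N.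
Proof.
rewrite size_MXaddC; case: ifP => // _; rewrite size_polyC; by case: (u != 0).

Qed.

Lemma size_lin1 (L : fieldType) (u v : L) : u != 0 -> size (u%:P * 'X + v%:P) = 2.
Proof.
by move=> u0; rewrite size_MXaddC polyC_eq0 (negPf u0) /= size_polyC u0.
Qed.

Lemma dvd_small (L : fieldType) (g d : {poly L}) :
  g %| d -> (size d < size g)%N -> d = 0.
Proof.
move=> gd sd; apply/eqP; apply: contraTT sd => d0.
by rewrite -leqNgt; apply: dvdp_leq.
Qed.

Lemma case3 (L : fieldType) (a b1 b2 c : L) :
  a != 0 ->
  (a%:P * 'X^2 + b1%:P * 'X + b2%:P) %| ('X^3 - 1) ->
  c * a = b1 -> b2 = c * b1 /\ a = c * b2.
Proof.
move=> a0 gd ca.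
set g := a%:P * 'X^2 + b1%:P * 'X + b2%:P.
have sg : size g = 3.
  have -> : g = (a%:P * 'X + b1%:P) * 'X + b2%:P by rewrite /g; ring.
  rewrite size_MXaddC size_lin1 //; case: ifP => // /andP [/eqP h _]; move: (size_lin1 b1 a0); rewrite h size_poly0 //.
have g1d : g %| 'X * g - a%:P * ('X^3 - 1).
  by rewrite dvdp_sub ?dvdp_mull ?dvdpp.
have e : 'X * g - a%:P * ('X^3 - 1) - c%:P * g =
   (b2 - c * b1)%:P * 'X + (a - c * b2)%:P.
  rewrite /g !polyCB !polyCM -ca polyCM. ring.
have gd2 : g %| (b2 - c * b1)%:P * 'X + (a - c * b2)%:P.
  by rewrite -e dvdp_sub ?dvdp_mull ?dvdpp.
have := dvd_small gd2; rewrite sg; move/(_ (leq_ltn_trans (size_lin _ _) (ltnSn _))) => d0.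
have := congr1 (fun p : {poly L} => p`_1) d0.
have := congr1 (fun p : {poly L} => p`_0) d0.
rewrite !coefD !coefMX !coefC /= ?coef0 => h0 h1.
move: h0 h1; rewrite add0r addr0 => /eqP; rewrite subr_eq0 => /eqP h0 /eqP; rewrite subr_eq0 => /eqP h1.
by split.
Qed.

Lemma case4c2 (L : fieldType) (a b1 b2 b3 : L) : 2%:R = 0 :> L ->
  size (gcdp ('X^4 - 1) (a%:P * 'X^3 + b1%:P * 'X^2 + b2%:P * 'X + b3%:P)) = 3 ->
  a + b2 = 0.
Proof.
move=> two sh.
set g := a%:P * 'X^3 + b1%:P * 'X^2 + b2%:P * 'X + b3%:P.
set h := gcdp _ _ in sh.
have two' : 2%:R = 0 :> {poly L} by rewrite -polyC_natr two.
have e4 : 'X^4 - 1 = ('X - 1%:P) ^+ 4 :> {poly L}.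
  apply/eqP; rewrite -subr_eq0; apply/eqP.
  have -> : 'X^4 - 1 - ('X - 1%:P) ^+ 4 = (2%:R : {poly L}) * (2%:R * 'X^3 - 3%:R * 'X^2 + 2%:R * 'X - 1).
    rewrite polyC1; ring.
  by rewrite two' mul0r.
have : h %| ('X - 1%:P) ^+ 4 by rewrite -e4 dvdp_gcdl.
case/dvdp_exp_XsubCP => k _ hk.
have k2 : k = 2%N.
  by move: (eqp_size hk); rewrite sh size_exp_XsubC => -[].
have e2 : ('X - 1%:P) ^+ 2 = 'X^2 - 1 :> {poly L}.
  apply/eqP; rewrite -subr_eq0; apply/eqP.
  have -> : ('X - 1%:P) ^+ 2 - ('X^2 - 1) = (2%:R : {poly L}) * (1 - 'X).
    rewrite polyC1; ring.
  by rewrite two' mul0r.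
have gd : 'X^2 - 1 %| g by rewrite -e2 -k2 -(eqp_dvdl _ hk) dvdp_gcdr.
have e : g - ('X^2 - 1) * (a%:P * 'X + b1%:P) = (a + b2)%:P * 'X + (b1 + b3)%:P.
  rewrite /g !polyCD; ring.
have gd2 : 'X^2 - 1 %| (a + b2)%:P * 'X + (b1 + b3)%:P.
  by rewrite -e dvdp_sub ?dvdp_mulr ?dvdpp.
have := dvd_small gd2; rewrite size_Xn_sub_1 //.
move/(_ (leq_ltn_trans (size_lin _ _) (ltnSn _))) => d0.
have := congr1 (fun p : {poly L} => p`_1) d0.
by rewrite !coefD !coefMX !coefC /= ?coef0 addr0.
Qed.


Lemma case4odd (L : fieldType) (i : L) (g : {poly L}) : 2%:R != 0 :> L -> i ^+ 2 = -1 ->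
  size (gcdp ('X^4 - 1) g) = 3 ->
  exists z1 z2, [/\ z1 != z2, z1 \in [:: 1; -1; i; -i], z2 \in [:: 1; -1; i; -i],
     root g z1 & root g z2].
Proof.
move=> two i2 sh.
set h := gcdp _ _ in sh.
set r := [:: 1; -1; i; -i].
have e4 : 'X^4 - 1 = \prod_(z <- r) ('X - z%:P).
  rewrite !big_cons big_nil mulr1 !polyCN polyC1.
  have I2 : i%:P ^+ 2 = -1 :> {poly L} by rewrite -rmorphXn /= i2 polyCN polyC1.
  have -> : ('X - 1) * (('X - - 1) * (('X - i%:P) * ('X - - i%:P))) = ('X^2 - 1) * ('X^2 - i%:P ^+ 2) :> {poly L}.
    ring.
  rewrite I2; ring.
have [m hm] : {m | h %= \prod_(z <- mask m r) ('X - z%:P)}.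
  by apply: dvdp_prod_XsubC; rewrite -e4 dvdp_gcdl.
have ur : uniq r.
  have i0 : i != 0 by apply/eqP => i0; move: i2; rewrite i0 expr0n /= => /eqP; rewrite eq_sym oppr_eq0 oner_eq0.
  have n1 : (1 : L) != -1 by rewrite -subr_eq0 opprK; exact: two.
  have in1 : i != 1 by apply/eqP => i1; move: i2; rewrite i1 expr1n => /eqP; rewrite (negPf n1).
  have inm1 : i != -1 by apply/eqP => i1; move: i2; rewrite i1 sqrrN expr1n => /eqP; rewrite (negPf n1).
  have imi : i != - i.
    by rewrite -subr_eq0 opprK -mulr2n -mulr_natr mulf_neq0.
  rewrite /r /= !inE !negb_or n1 (eq_sym 1 i) in1 (eq_sym (-1) i) inm1 imi eqr_opp (eq_sym 1 i) in1.
  by rewrite (eq_sym 1) eqr_oppLR inm1.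
have um := mask_uniq ur m.
have sm : size (mask m r) = 2%N.
  by move: (eqp_size hm); rewrite sh size_prod_XsubC => -[].
have rt z : z \in mask m r -> root g z.
  move=> zm; rewrite -dvdp_XsubCl; apply: dvdp_trans (dvdp_gcdr ('X^4 - 1) g).
  rewrite (eqp_dvdr _ hm) (big_rem z zm) /=; exact: dvdp_mulr.
have mm0 z : z \in mask m r -> z \in r := @mem_mask _ z m r.
move: um sm rt mm0.
case: (mask m r) => [|z1 [|z2 [|]]] //= um _ rt mm.
exists z1, z2; split.
- by move: um; rewrite inE andbT.
- by apply: mm; rewrite inE eqxx.
- by apply: mm; rewrite !inE eqxx orbT.
- by apply: rt; rewrite inE eqxx.
- by apply: rt; rewrite !inE eqxx orbT.
Qed.

Lemma size3 (L : fieldType) (a b1 b2 : L) : a != 0 ->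
  size (a%:P * 'X^2 + b1%:P * 'X + b2%:P) = 3%N.
Proof.
move=> a0.
have -> : a%:P * 'X^2 + b1%:P * 'X + b2%:P = (a%:P * 'X + b1%:P) * 'X + b2%:P by ring.
rewrite size_MXaddC size_lin1 //; case: ifP => // /andP [/eqP h _].
by move: (size_lin1 b1 a0); rewrite h size_poly0.
Qed.

Lemma hg4 (L : fieldType) (a b1 b2 b3 z : L) :
  (a%:P * 'X^3 + b1%:P * 'X^2 + b2%:P * 'X + b3%:P).[z] = a * z ^+ 3 + b1 * z ^+ 2 + b2 * z + b3.
Proof. by rewrite !hornerE. Qed.

Lemma frob_eval (L : finFieldType) q p k (chp : p \in [char L]) (qe : q = (p ^ k)%N) (a z : L) :
  a ^+ (q ^ 4) = a ->
  (a * z ^+ 3 + a ^+ q * z ^+ 2 + a ^+ (q ^ 2) * z + a ^+ (q ^ 3)) ^+ q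
  = a ^+ q * (z ^+ q) ^+ 3 + a ^+ (q ^ 2) * (z ^+ q) ^+ 2
    + a ^+ (q ^ 3) * z ^+ q + a.
Proof.
move=> a4; rewrite qe in a4 *; rewrite !(frobD k chp).
set Q := (p ^ k)%N in a4 *.
have -> : (a * z ^+ 3) ^+ Q = a ^+ Q * (z ^+ Q) ^+ 3 by rewrite exprMn exprAC.
have -> : (a ^+ Q * z ^+ 2) ^+ Q = a ^+ (Q ^ 2) * (z ^+ Q) ^+ 2.
  by rewrite exprMn -(exprM a) mulnn exprAC.
have -> : (a ^+ (Q ^ 2) * z) ^+ Q = a ^+ (Q ^ 3) * z ^+ Q.
  by rewrite exprMn -(exprM a) -expnSr.
by rewrite -(exprM a) -expnSr a4.
Qed.

Lemma zpow (L : fieldType) (z : L) t : z ^+ 2 = -1 -> z ^+ (4 * t + 3) = - z.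
Proof.
move=> z2; rewrite exprD exprM (_ : z ^+ 4 = 1); last first.
  by rewrite (_ : 4 = 2 * 2)%N // exprM z2 sqrrN expr1n.
by rewrite expr1n mul1r exprS z2 mulrN1.
Qed.

Lemma key_i (L : fieldType) (z a b1 b2 b3 : L) : 2%:R != 0 :> L -> z ^+ 2 = -1 ->
  a * z ^+ 3 + b1 * z ^+ 2 + b2 * z + b3 = 0 ->
  b1 * (- z) ^+ 3 + b2 * (- z) ^+ 2 + b3 * (- z) + a = 0 -> b2 = a.
Proof.
move=> two z2 E1 E2.
have : z * (a * z ^+ 3 + b1 * z ^+ 2 + b2 * z + b3) + (b1 * (- z) ^+ 3 + b2 * (- z) ^+ 2 + b3 * (- z) + a)
   = 2%:R * (a - b2) + (z ^+ 2 + 1) * (a * (z ^+ 2 - 1) + 2%:R * b2) by ring.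
rewrite E1 E2 z2 addNr !mul0r mulr0 !addr0 => /esym/eqP.
by rewrite mulf_eq0 (negPf two) /= subr_eq0 => /eqP.
Qed.

Lemma key_1 (L : fieldType) (a b1 b2 b3 : L) : 2%:R != 0 :> L ->
  a * 1 ^+ 3 + b1 * 1 ^+ 2 + b2 * 1 + b3 = 0 ->
  a * (-1) ^+ 3 + b1 * (-1) ^+ 2 + b2 * (-1) + b3 = 0 -> a + b2 = 0.
Proof.
move=> two E1 E2.
have : (a * 1 ^+ 3 + b1 * 1 ^+ 2 + b2 * 1 + b3) - (a * (-1) ^+ 3 + b1 * (-1) ^+ 2 + b2 * (-1) + b3)
   = 2%:R * (a + b2) by ring.
rewrite E1 E2 subrr => /esym/eqP.
by rewrite mulf_eq0 (negPf two) /= => /eqP.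
Qed.

Theorem lemma3p1 (q n : nat) (L : finFieldType) :
  prime_power q -> (0 < n)%N -> #|L| = (q ^ n)%N ->
  (exists a : L, primitive_elt a /\ k_normal q n 2 a) ->
  (4 <= n)%N /\ (n = 4%N -> q %% 4 = 1)%N.
Proof.
move=> [p [k [pp [k0 qe]]]] n0 cardL [a [pa na]].
have p2 := prime_gt1 pp.
have q2 : (2 <= q)%N.
  rewrite qe; apply: leq_trans (prime_gt1 pp) _.
  by rewrite -{1}(expn1 p) leq_pexp2l // prime_gt0.
have chp : p \in [char L].
  by apply: (@card_finPcharP _ _ (k * n)%N) => //; rewrite cardL qe expnM.
move: na; rewrite /k_normal.
set h := gcdp _ _ => sh0.
have sh : size h = 3%N by move: sh0; case: (size h) => // -[] // -[] // -[].
have a0 : (2 <= n)%N -> a != 0.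
  move=> n2; apply/eqP => a0; move: pa; rewrite a0 => /prim0; rewrite cardL.
  have : (q ^ 2 <= q ^ n)%N by rewrite leq_pexp2l // ltnW.
  move=> h1 h2; have := leq_trans h1 h2; nia.
have main4 : n = 4%N -> (q %% 4 = 1)%N.
  move=> n4; subst n.
  have aq4 : a ^+ (q ^ 4)%N = a by rewrite -cardL expf_card.
  have a00 := a0 isT.
  have cN : a ^+ (q ^ 2)%N = - a -> False.
    move=> e.
    have e2 : a ^+ (q ^ 2 - 1)%N = -1.
      apply: (mulIf a00); rewrite -exprSr (_ : (q ^ 2 - 1).+1 = q ^ 2)%N; last by nia.
      by rewrite e mulN1r.
    have : a ^+ (2 * (q ^ 2 - 1))%N = 1 by rewrite mulnC exprM e2 sqrrN expr1n.
    have h1 : (0 < 2 * (q ^ 2 - 1))%N by nia.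
    move/(prim_ord pa h1); rewrite cardL; nia.
  have cP : a ^+ (q ^ 2)%N = a -> False.
    move=> e.
    have e2 : a ^+ (q ^ 2 - 1)%N = 1.
      apply: (mulIf a00); rewrite -exprSr (_ : (q ^ 2 - 1).+1 = q ^ 2)%N; last by nia.
      by rewrite e mul1r.
    have h1 : (0 < (q ^ 2 - 1))%N by nia.
    move: e2; move/(prim_ord pa h1); rewrite cardL; nia.
  move: sh; rewrite /h g4 => sh.
  have [q4|q4|q4|q4] : [\/ (q %% 4 = 0)%N, (q %% 4 = 1)%N, (q %% 4 = 2)%N | (q %% 4 = 3)%N].
    have : (q %% 4 < 4)%N by rewrite ltn_pmod.
    case: (q %% 4)%N => [|[|[|[|]]]] //; by constructor.
  - exfalso.
    have two : 2%:R = 0 :> L.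
      apply/eqP; rewrite -(dvdn_pcharf chp).
      have : (2 %| p ^ k)%N by rewrite -qe; apply/dvdnP; exists (q %/ 2)%N; lia.
      by rewrite Euclid_dvdX // dvdn_prime2 // => /andP [/eqP <- _].
    have := case4c2 two sh; rewrite addrC => /eqP; rewrite addr_eq0 => /eqP; exact: cN.
  - by [].
  - exfalso.
    have two : 2%:R = 0 :> L.
      apply/eqP; rewrite -(dvdn_pcharf chp).
      have : (2 %| p ^ k)%N by rewrite -qe; apply/dvdnP; exists (q %/ 2)%N; lia.
      by rewrite Euclid_dvdX // dvdn_prime2 // => /andP [/eqP <- _].
    have := case4c2 two sh; rewrite addrC => /eqP; rewrite addr_eq0 => /eqP; exact: cN.
  - exfalso.
    have two : 2%:R != 0 :> L.
      rewrite -(dvdn_pcharf chp) dvdn_prime2 //; apply/eqP => p2e.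
      have : (2 %| q)%N by rewrite qe p2e Euclid_dvdX // dvdnn k0.
      move/dvdnP => [m hm]; lia.
    set t := (q %/ 4)%N.
    have qt : q = (4 * t + 3)%N by rewrite /t; lia.
    set e := (2 * (2 * t + 1) * (t + 1) * (q ^ 2 + 1))%N.
    have qe4 : (4 * e + 1 = q ^ 4)%N by rewrite /e qt; ring.
    set i := a ^+ e.
    have i4 : i ^+ 4 = 1.
      apply: (mulIf a00); rewrite mul1r /i -exprM -exprSr mulnC addn1 in qe4 *.
      by rewrite qe4 aq4.
    have i2 : i ^+ 2 = -1.
      have : (i ^+ 2 - 1) * (i ^+ 2 + 1) = 0.
        have -> : (i ^+ 2 - 1) * (i ^+ 2 + 1) = i ^+ 4 - 1 by ring.
        by rewrite i4 subrr.
      move/eqP; rewrite mulf_eq0 => /orP [|]; last by rewrite addr_eq0 => /eqP.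
      rewrite subr_eq0 => /eqP; rewrite /i -exprM.
      have h1 : (0 < e * 2)%N by rewrite /e; nia.
      move/(prim_ord pa h1); rewrite cardL -qe4; nia.
    set b1 := a ^+ q; set b2 := a ^+ (q ^ 2)%N; set b3 := a ^+ (q ^ 3)%N.
    have Hi z : z ^+ 2 = -1 -> root (a%:P * 'X^3 + b1%:P * 'X^2 + b2%:P * 'X + b3%:P) z -> False.
      move=> z2; rewrite /root hg4 => /eqP E1.
      have zq : z ^+ q = - z by rewrite qt zpow.
      have := frob_eval chp qe z aq4; rewrite -/b1 -/b2 -/b3 E1 expr0n /=.
      rewrite (_ : q == 0%N = false); last by apply/negbTE; rewrite -lt0n; apply: leq_trans q2.
      rewrite zq => /esym E2.
      exact: cP (key_i two z2 E1 E2).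
    have [z1 [z2 [z12 z1r z2r r1 r2]]] := case4odd two i2 sh.
    have H1 : root (a%:P * 'X^3 + b1%:P * 'X^2 + b2%:P * 'X + b3%:P) 1 ->
              root (a%:P * 'X^3 + b1%:P * 'X^2 + b2%:P * 'X + b3%:P) (-1) -> False.
      rewrite /root !hg4 => /eqP E1 /eqP E2.
      by apply: cN; apply/eqP; rewrite -addr_eq0 addrC (key_1 two E1 E2).
    have mi2 : (- i) ^+ 2 = -1 by rewrite sqrrN.
    move: z1r z2r z12 r1 r2; rewrite !inE.
    case/or4P => /eqP -> ; case/or4P => /eqP -> //; rewrite ?eqxx //= => _ r1 r2;
      try by [exact: Hi i2 _ | exact: Hi mi2 _ | exact: Hi i2 r1 | exact: Hi mi2 r1 | exact: Hi i2 r2 | exact: Hi mi2 r2 | exact: H1 r1 r2 | exact: H1 r2 r1].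
split => //.
rewrite leqNgt; apply/negP => nlt.
have : n = 1%N \/ n = 2%N \/ n = 3%N by lia.
clear main4 sh0.
case=> [?|[?|?]]; subst n.
-
  have : (size h <= size ('X^1 - 1 : {poly L})%R)%N.
    apply: dvdp_leq; last exact: dvdp_gcdl.
    by rewrite -size_poly_eq0 size_XnsubC.
  by rewrite sh size_XnsubC.
-
  have a00 := a0 isT.
  have : h %= 'X^2 - 1 by rewrite -dvdp_size_eqp ?dvdp_gcdl // sh size_XnsubC.
  move=> hq; have gd : 'X^2 - 1 %| g_poly q 2 a by rewrite -(eqp_dvdl _ hq) dvdp_gcdr.
  move: gd; rewrite g2 => /dvd_small; rewrite size_XnsubC // size_lin1 // => /(_ isT) g0.
  by move: (size_lin1 (a ^+ q) a00); rewrite g0 size_poly0.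
-
  have a00 := a0 isT.
  have hg : h %= g_poly q 3 a by rewrite -dvdp_size_eqp ?dvdp_gcdr // sh g3 size3.
  have gd : g_poly q 3 a %| 'X^3 - 1 by rewrite -(eqp_dvdl _ hg) dvdp_gcdl.
  move: gd; rewrite g3 => gd.
  set c := a ^+ q / a.
  have ca : c * a = a ^+ q by rewrite /c divfK.
  have [e1 e2] := case3 a00 gd ca.
  have c3 : c ^+ 3 = 1.
    apply: (mulIf a00); rewrite mul1r {2}e2 e1 -ca; ring.
  have aq1 : a ^+ (q.-1) = c.
    apply: (mulIf a00); rewrite ca -exprSr prednK //; exact: leq_trans q2.
  have : a ^+ (q.-1 * 3)%N = 1 by rewrite exprM aq1 c3.
  have h1 : (0 < q.-1 * 3)%N by nia.
  move/(prim_ord pa h1); rewrite cardL; nia.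
Qed.
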